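(* Let $q$ be a prime power, $r\ge 1$ an integer, and $\mathcal{S}$ a $q^r$-divisible spanning set of $q^{r+1}$ points in $\mathrm{PG}(v-1,q)$. Then the number of hyperplanes $H$ with $\mathcal{S}\cap H=\emptyset$ is at least $\frac{q^{v-r-1}-1}{q-1}$.
   Context: $\mathrm{PG}(v-1,q)$ is the projective space of $\mathbb{F}_q^v$; points are $1$-dimensional and hyperplanes $(v-1)$-dimensional subspaces of $\mathbb{F}_q^v$. A set $\mathcal{S}$ of points is spanning if its points span $\mathbb{F}_q^v$, and it is $q^r$-divisible if $|\mathcal{S}\cap H|\equiv|\mathcal{S}|\pmod{q^r}$ for every hyperplane $H$. *)

(* Defs.v *)
(* PG(v-1,q) over a finite field F with #|F| = q.
   Subspaces of F^v are represented canonically by square matrices A with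
   <<A>>%MS = A (row space = the subspace; genmx is a canonical representative). *)
From HB Require Import structures.
From mathcomp Require Import all_boot all_order all_algebra all_field.
Set Implicit Arguments. Unset Strict Implicit. Unset Printing Implicit Defensive.
Import GRing.Theory.
Local Open Scope ring_scope.

Definition is_point (F : finFieldType) (v : nat) (P : 'M[F]_v) : bool :=
  (\rank P == 1%N) && (<<P>>%MS == P).

Definition is_hyperplane (F : finFieldType) (v : nat) (H : 'M[F]_v) : bool :=
  (\rank H == v.-1) && (<<H>>%MS == H).

Definition point_set (F : finFieldType) (v : nat) (S : {set 'M[F]_v}) : Prop :=
  forall P, P \in S -> is_point P.

Definition card_in (F : finFieldType) (v : nat) (S : {set 'M[F]_v}) (H : 'M[F]_v) : nat :=
  #|[set P in S | (P <= H)%MS]|.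

Definition spanning (F : finFieldType) (v : nat) (S : {set 'M[F]_v}) : Prop :=
  \rank (\sum_(P in S) P)%MS = v.

Definition divisible (F : finFieldType) (v : nat) (S : {set 'M[F]_v}) (m : nat) : Prop :=
  forall H : 'M[F]_v, is_hyperplane H -> card_in S H = #|S| %[mod m].

(* Main.v *)
Require Import Defs.
From HB Require Import structures.
From mathcomp Require Import all_boot all_order all_algebra all_field zify.
Set Implicit Arguments. Unset Strict Implicit. Unset Printing Implicit Defensive.
Import GRing.Theory.

Section Helpers.
Local Open Scope ring_scope.
Variable F : finFieldType.

Lemma card_sub n m (A : 'M[F]_(m, n)) :
  #|[set u : 'rV[F]_n | (u <= A)%MS]| = (#|F| ^ \rank A)%N.
Proof.
rewrite -[\rank A]mul1n -card_mx.
have injA: injective (mulmxr (row_base A)).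
  have /row_freeP[A' A'K] := row_base_free A.
  by move=> ?; apply: can_inj (mulmxr A') _ => u; rewrite /= -mulmxA A'K mulmx1.
rewrite -(card_image (injA _)); apply: eq_card => v.
by rewrite inE -(eq_row_base A) (sameP submxP codomP).
Qed.

Lemma card_ker n m (M : 'M[F]_(n, m)) :
  #|[set u : 'rV[F]_n | u *m M == 0]| = (#|F| ^ (n - \rank M))%N.
Proof.
rewrite -mxrank_ker -card_sub; apply: eq_card => u; by rewrite !inE sub_kermx.
Qed.

Lemma orthE n (P : 'M[F]_n) (u : 'rV[F]_n) : (P *m u^T == 0) = (u *m P^T == 0).
Proof. by rewrite -trmx_eq0 trmx_mul trmxK. Qed.

Lemma card_orth1 n (P : 'M[F]_n) : \rank P = 1%N ->
  #|[set u : 'rV[F]_n | P *m u^T == 0]| = (#|F| ^ (n - 1))%N.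
Proof.
move=> rP; transitivity #|[set u : 'rV[F]_n | u *m P^T == 0]|.
  by apply: eq_card => u; rewrite !inE orthE.
by rewrite card_ker mxrank_tr rP.
Qed.

Lemma distinct_points n (P P' : 'M[F]_n) : is_point P -> is_point P' -> P != P' ->
  \rank (row_mx P^T P'^T) = 2%N.
Proof.
move=> /andP[/eqP rP /eqP gP] /andP[/eqP rP' /eqP gP'] neq.
rewrite -tr_col_mx mxrank_tr -(eqmx_rank (introT eqmxP (addsmxE P P'))).
have hsum := mxrank_sum_cap P P'; rewrite rP rP' in hsum.
have hc : (\rank (P :&: P') <= 1)%N by rewrite -rP mxrankS ?capmxSl.
have [Hc0|Hc1]: \rank (P :&: P') = 0%N \/ \rank (P :&: P') = 1%N.
  by case: (\rank _) hc => [|[|]]; auto.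
  by rewrite Hc0 addn0 in hsum.
have E : (P :&: P' == P)%MS.
  by have := mxrank_leqif_eq (capmxSl P P'); rewrite Hc1 rP => -[_ <-].
have sPP': (P <= P')%MS.
  by move/eqmxP: E => E; rewrite -E capmxSr.
have sP'P: (P' <= P)%MS.
  have := mxrank_leqif_eq sPP'; rewrite rP rP' => -[_ /esym].
  by rewrite eqxx => /andP[].
have: (P == P')%MS by rewrite sPP' sP'P.
by move/genmxP; rewrite gP gP' => EE; rewrite EE eqxx in neq.
Qed.

Lemma card_orth2 n (P P' : 'M[F]_n) : is_point P -> is_point P' -> P != P' ->
  #|[set u : 'rV[F]_n | (P *m u^T == 0) && (P' *m u^T == 0)]| = (#|F| ^ (n - 2))%N.
Proof.
move=> pP pP' neq; rewrite -(distinct_points pP pP' neq) -card_ker.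
apply: eq_card => u; by rewrite !inE !orthE mul_mx_row row_mx_eq0.
Qed.

Lemma card_sep (T : finType) (A : {set T}) (p : pred T) :
  #|[set x in A | p x]| = (\sum_(x in A) (p x : nat))%N.
Proof.
rewrite -sum1_card big_mkcond [RHS]big_mkcond; apply: eq_bigr => x _.
by rewrite !inE; case: (x \in A); case: (p x).
Qed.

Lemma card_sepT (T : finType) (p : pred T) :
  #|[set x | p x]| = (\sum_x (p x : nat))%N.
Proof.
rewrite -sum1_card big_mkcond; apply: eq_bigr => x _.
by rewrite !inE; case: (p x).
Qed.

Variables (v : nat) (S : {set 'M[F]_v}).
Definition orth (P : 'M[F]_v) (u : 'rV[F]_v) := P *m u^T == 0.
Definition Nu u := #|[set P in S | orth P u]|.

Lemma sum_N : point_set S -> (\sum_u Nu u = #|S| * #|F| ^ (v - 1))%N.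
Proof.
move=> pS; under eq_bigr do rewrite /Nu card_sep.
rewrite exchange_big /= -sum_nat_const; apply: eq_bigr => P PS.
rewrite -(card_orth1 (P := P)); last by case/andP: (pS P PS) => /eqP.
by rewrite card_sepT.
Qed.

Lemma sum_N2 : point_set S ->
  (\sum_u Nu u ^ 2 = #|S| * (#|F| ^ (v - 1) + (#|S| - 1) * #|F| ^ (v - 2)))%N.
Proof.
move=> pS; under eq_bigr => u _.
  rewrite /Nu card_sep -mulnn big_distrl /=.
  under eq_bigr => P _ do rewrite big_distrr /=.
  over.
rewrite exchange_big /= -sum_nat_const; apply: eq_bigr => P PS.
rewrite exchange_big /= (bigD1 P) //=.
have pP := pS P PS.
rewrite -(card_orth1 (P := P)); last by case/andP: pP => /eqP.
rewrite card_sepT; congr (_ + _)%N.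
  by apply: eq_bigr => u _; rewrite mulnb andbb.
rewrite [#|S|](cardsD1 P S) PS add1n subn1 /= -sum_nat_const.
rewrite [RHS](eq_bigl (fun i => (i \in S) && (i != P))); last first.
  by move=> i; rewrite !inE andbC.
apply: eq_bigr => P' /andP[P'S neq].
rewrite -(card_orth2 (pS P' P'S) pP neq) card_sepT.
by apply: eq_bigr => u _; rewrite mulnb andbC.
Qed.


Lemma sum_mem (T : finType) (A : {set T}) : (\sum_x (x \in A : nat) = #|A|)%N.
Proof. by rewrite -sum1_card [RHS]big_mkcond; apply: eq_bigr => x _; case: (x \in A). Qed.

Definition hyp (u : 'rV[F]_v) : 'M[F]_v := <<kermx u^T>>%MS.

Lemma hyp_hyperplane u : u != 0 -> is_hyperplane (hyp u).
Proof.
move=> nz; rewrite /is_hyperplane /hyp mxrank_gen mxrank_ker mxrank_tr rank_rV nz.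
by rewrite subn1 eqxx genmx_id eqxx.
Qed.

Lemma sub_hyp (P : 'M[F]_v) u : (P <= hyp u)%MS = orth P u.
Proof. by rewrite /hyp genmxE sub_kermx. Qed.

Lemma Nu_card_in u : Nu u = card_in S (hyp u).
Proof. by apply: eq_card => P; rewrite !inE sub_hyp. Qed.

Lemma Nu0 : Nu 0 = #|S|.
Proof. by apply: eq_card => P; rewrite !inE /orth trmx0 mulmx0 eqxx andbT. Qed.

Lemma Nu_lt u : spanning S -> (0 < v)%N -> u != 0 -> Nu u != #|S|.
Proof.
move=> sp v0 nz; apply/negP => /eqP E.
have eS : [set P in S | orth P u] = S.
  apply/eqP; rewrite eqEcard -/(Nu u) E leqnn andbT.
  by apply/subsetP => P; rewrite inE => /andP[].
have sub : (\sum_(P in S) P <= kermx u^T)%MS.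
  apply/sumsmx_subP => P PS; rewrite sub_kermx.
  by move: PS; rewrite -{1}eS inE => /andP[].
have := mxrankS sub; rewrite sp mxrank_ker mxrank_tr rank_rV nz /=.
lia.
Qed.

Lemma Nu_dvd r u : divisible S (#|F| ^ r) -> #|S| = (#|F| ^ r.+1)%N -> u != 0 ->
  (#|F| ^ r %| Nu u)%N.
Proof.
move=> div cS nz; rewrite Nu_card_in /dvdn (div _ (hyp_hyperplane nz)) cS.
by rewrite expnS modnMl.
Qed.

Definition Kset (H : 'M[F]_v) := [set u : 'rV[F]_v | u *m H^T == 0] :\ 0.

Lemma cardK H : (0 < v)%N -> is_hyperplane H -> #|Kset H| = (#|F| - 1)%N.
Proof.
move=> v0 /andP[/eqP rH _].
have := cardsD1 0 [set u : 'rV[F]_v | u *m H^T == 0].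
rewrite card_ker mxrank_tr rH inE mul0mx eqxx /Kset.
have -> : (v - v.-1 = 1)%N by lia.
by rewrite expn1 => ->; rewrite add1n subn1.
Qed.

Lemma A_le : (0 < v)%N ->
  (#|[set u : 'rV[F]_v | (u != 0%R) && (Nu u == 0%N)]| <=
   #|[set H : 'M[F]_v | is_hyperplane H & [forall P in S, ~~ (P <= H)%MS]]| * (#|F| - 1))%N.
Proof.
move=> v0; set E := [set H : 'M[F]_v | _ & _].
rewrite -sum1_card.
apply: (@leq_trans (\sum_(u in [set u : 'rV[F]_v | (u != 0%R) && (Nu u == 0%N)])
          \sum_(H in E) (u \in Kset H : nat))).
  apply: leq_sum => u; rewrite inE => /andP[nz N0].
  have hE : hyp u \in E.
    rewrite inE hyp_hyperplane //=; apply/forall_inP => P PS; rewrite sub_hyp.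
    apply/negP => oP; move: N0; rewrite /Nu cards_eq0 => /eqP S0.
    have : P \in [set P in S | orth P u] by rewrite inE PS oP.
    by rewrite S0 inE.
  rewrite (bigD1 (hyp u)) //=.
  have -> : u \in Kset (hyp u).
    by rewrite /Kset !inE nz /= -orthE -/(orth _ _) -sub_hyp submx_refl.
  by rewrite leq_addr.
apply: (@leq_trans (\sum_u \sum_(H in E) (u \in Kset H : nat))).
  rewrite big_mkcond; apply: leq_sum => u _; by case: (u \in _).
rewrite exchange_big /= -sum_nat_const; apply: eq_leq; apply: eq_bigr => H.
by rewrite inE => /andP[hH _]; rewrite sum_mem cardK.
Qed.

End Helpers.
Lemma perj (q j : nat) : 1 <= j -> j < q -> j*j + (q-1) <= q*j.
Proof. nia. Qed.
Lemma core (q Q z A B : nat) : 2 <= q -> 0 < Q -> 0 < z ->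
  q*Q*(q*Q*z + (q*Q-1)*(Q*z)) + (q-1)*(Q*Q)*B <= q*Q*(q*Q*(q*Q*z)) ->
  A + B + 1 = q*q*(Q*z) -> q*z - 1 <= A.
Proof.
move=> q2 Q0 z0 H E.
have H' : q*q*z + q*(q*Q-1)*z + (q-1)*B <= q*q*q*Q*z.
  rewrite -(@leq_pmul2l (Q*Q)); last by rewrite muln_gt0 Q0.
  move: H; set t := q*Q-1; have -> : q*Q = t.+1 by rewrite /t; nia.
  move=> H; apply: leq_trans (leq_trans _ H) _; nia.
nia.
Qed.

Unset Implicit Arguments.
Set Strict Implicit.

Theorem mainTheorem4 (F : finFieldType) (v r : nat) (S : {set 'M[F]_v}) :
  (1 <= r)%N ->
  point_set S ->
  spanning S ->
  divisible S (#|F| ^ r) ->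
  #|S| = (#|F| ^ r.+1)%N ->
  ((#|F| ^ (v - r - 1) - 1) %/ (#|F| - 1) <=
     #|[set H : 'M[F]_v | is_hyperplane H & [forall P in S, ~~ (P <= H)%MS]]|)%N.
Proof.
move=> r1 pS sp div cS.
case: (leqP v r.+1) => hv.
  rewrite (_ : (v - r - 1 = 0)%N); last lia.
  by rewrite expn0 subnn div0n.
have v0 : (0 < v)%N by lia.
have q2 : (2 <= #|F|)%N.
  by apply/card_gt1P; exists 0%R, 1%R; rewrite eq_sym oner_eq0.
set q := #|F| in q2 cS div *.
set Q := (q ^ r)%N.
set z := (q ^ (v - r.+2))%N.
have Q0 : (0 < Q)%N by rewrite expn_gt0; lia.
have z0 : (0 < z)%N by rewrite expn_gt0; lia.
have e1 : (q ^ (v - 1) = q * Q * z)%N.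
  by rewrite /Q /z -expnS -expnD; congr (_ ^ _); lia.
have e2 : (q ^ (v - 2) = Q * z)%N.
  by rewrite /Q /z -expnD; congr (_ ^ _); lia.
have e0 : (q ^ v = q * q * (Q * z))%N.
  by rewrite /Q /z -expnD -mulnA -!expnS; congr (_ ^ _); lia.
have e3 : (q ^ (v - r - 1) = q * z)%N.
  by rewrite /z -expnS; congr (_ ^ _); lia.
have cS' : #|S| = (q * Q)%N by rewrite cS expnS.
have HSN := sum_N pS; rewrite e1 cS' in HSN.
have HSN2 := sum_N2 pS; rewrite e1 e2 cS' in HSN2.
set B := (\sum_(u : 'rV[F]_v) ((u != 0%R) && (Nu S u != 0%N) : nat))%N.
set A := #|[set u : 'rV[F]_v | (u != 0%R) && (Nu S u == 0%N)]|.
have Hineq : (\sum_u Nu S u ^ 2 + (q - 1) * (Q * Q) * B <= q * Q * \sum_u Nu S u)%N.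
  rewrite /B !big_distrr -big_split /=; apply: leq_sum => u _.
  have [->|nz] := eqVneq u 0%R.
    by rewrite /= muln0 addn0 (Nu0 S) cS' -mulnn.
  have lt : (Nu S u < q * Q)%N.
    rewrite -cS' ltn_neqAle Nu_lt //=.
    by apply: subset_leq_card; apply/subsetP => P; rewrite inE => /andP[].
  have /dvdnP [j Ej] := Nu_dvd div cS nz.
  rewrite /= Ej -/Q; case: j Ej => [|j] Ej.
  by rewrite !mul0n /= !muln0.
have nz' : (j.+1 * Q != 0)%N by rewrite muln_eq0 negb_or /= -lt0n Q0.
rewrite nz' muln1.
have hj := @perj q j.+1 isT.
have : (j.+1 < q)%N by move: lt; rewrite Ej ltn_pmul2r.
move/hj => {}hj.
have := leq_mul (leqnn (Q * Q)) hj.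
nia.
have Hpart : (A + B + 1 = q * q * (Q * z))%N.
  rewrite -e0 /A card_sepT /B -big_split /=.
  have <- : (\sum_(u : 'rV[F]_v) 1 = q ^ v)%N by rewrite sum1_card card_mx mul1n.
  have E1 : (\sum_(u : 'rV[F]_v) (u == 0%R : nat) = 1)%N.
    by rewrite (bigD1 0%R) //= eqxx big1 // => u /negbTE ->.
  rewrite -[X in (_ + X = _)%N]E1 -big_split /=; apply: eq_bigr => u _.
  by case: (u == 0%R); case: (Nu S u == 0%N).
have HA : (q * z - 1 <= A)%N.
  apply: (core q2 Q0 z0 _ Hpart).
  by rewrite -HSN -HSN2.
have HAle := A_le S v0.
rewrite e3 -/q.
apply: leq_trans (leq_div2r (q - 1) (leq_trans HA HAle)) _.
rewrite mulnK //; lia.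
Qed.
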